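(* Let $\mathbf{A}$ be a $0$-$1$ matrix of full row rank with $I$ columns and at least one $1$ in every column, and let $RM_{\boldsymbol\lambda}(\mathbf{A})=\{\boldsymbol\lambda\in\mathbb{R}^I_{>0}:\ \log\boldsymbol\lambda=\mathbf{A}'\boldsymbol\theta \text{ for some }\boldsymbol\theta\}$. Let $\{\boldsymbol\lambda_0^{r}\}_{r\ge1}\subset RM_{\boldsymbol\lambda}(\mathbf{A})$ be a sequence of true parameters with $\|\boldsymbol\lambda_0^r\|:=\min_{i}\lambda^r_{0,i}\to\infty$, and for each $r$ let $\boldsymbol Y^r=(Y^r_1,\dots,Y^r_I)$ have independent components $Y^r_i\sim\mathrm{Poisson}(\lambda^r_{0,i})$. Assume that the maximum likelihood estimate $\hat{\boldsymbol\lambda}^r$ of $\boldsymbol\lambda_0^r$ under $RM_{\boldsymbol\lambda}(\mathbf{A})$ exists. Then $$\Delta[(\boldsymbol\lambda_0^r)^{-1/2}]\,(\hat{\boldsymbol\lambda}^r-\boldsymbol\lambda_0^r)=O_p(\mathbf 1)\quad\text{as } \|\boldsymbol\lambda_0^r\|\to\infty.$$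
   Context: $\Delta[\boldsymbol v]$ denotes the diagonal matrix with the vector $\boldsymbol v$ on its diagonal; powers and logarithms of vectors are taken componentwise. $\|\boldsymbol\lambda\|$ denotes the minimum component $\min_i\lambda_i$ (not a standard norm). The MLE under the model is the maximizer over $RM_{\boldsymbol\lambda}(\mathbf{A})$ of the Poisson log-likelihood $\boldsymbol Y'\log\boldsymbol\lambda-\mathbf 1'\boldsymbol\lambda$; it is said to exist when this maximum is attained in $RM_{\boldsymbol\lambda}(\mathbf{A})$. *)

(* Defs.v *)
From HB Require Import structures.
From mathcomp Require Import all_boot all_order all_algebra.
From mathcomp Require Import all_classical all_reals all_analysis.
From mathcomp Require Import poisson_distribution.

Set Implicit Arguments. Unset Strict Implicit. Unset Printing Implicit Defensive.
Import Order.TTheory GRing.Theory Num.Theory.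
Local Open Scope ring_scope.

Definition zero_one_mx (R : realType) (J I : nat) (A : 'M[R]_(J, I)) : Prop :=
  forall j i, A j i = 0 \/ A j i = 1.

Definition full_row_rank (R : realType) (J I : nat) (A : 'M[R]_(J, I)) : Prop :=
  \rank A = J.

Definition col_has_one (R : realType) (J I : nat) (A : 'M[R]_(J, I)) : Prop :=
  forall i : 'I_I, exists j : 'I_J, A j i = 1.

Definition RM (R : realType) (J I : nat) (A : 'M[R]_(J, I)) : set 'cV[R]_I :=
  [set lam : 'cV[R]_I | (forall i, 0 < lam i 0) /\
             exists theta : 'cV[R]_J, map_mx (@ln R) lam = A^T *m theta].

Definition loglik (R : realType) (I : nat) (y : {ffun 'I_I -> nat}) (lam : 'cV[R]_I) : R :=
  \sum_(i < I) ((y i)%:R * ln (lam i 0) - lam i 0).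

Definition is_MLE (R : realType) (J I : nat) (A : 'M[R]_(J, I))
    (y : {ffun 'I_I -> nat}) (lamh : 'cV[R]_I) : Prop :=
  RM A lamh /\ forall lam, RM A lam -> loglik y lam <= loglik y lamh.

Definition pois_vec_pmf (R : realType) (I : nat) (lam : 'cV[R]_I)
    (y : {ffun 'I_I -> nat}) : R :=
  \prod_(i < I) poisson_pmf (lam i 0) (y i).

Definition pois_prob (R : realType) (I : nat) (lam : 'cV[R]_I)
    (E : set {ffun 'I_I -> nat}) : \bar R :=
  (\esum_(y in E) (pois_vec_pmf lam y)%:E)%R.

Definition min_to_infty (R : realType) (I : nat) (lam0 : nat -> 'cV[R]_I) : Prop :=
  forall K : R, exists r0 : nat, forall r, (r0 <= r)%N -> forall i, K <= lam0 r i 0.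

Definition big_error_event (R : realType) (J I : nat) (A : 'M[R]_(J, I))
    (lam0 : 'cV[R]_I) (M : R) : set {ffun 'I_I -> nat} :=
  [set y : {ffun 'I_I -> nat} | exists lamh : 'cV[R]_I, is_MLE A y lamh /\
     exists i, M < `| (lamh i 0 - lam0 i 0) / Num.sqrt (lam0 i 0) |].

(* Main.v *)
Require Import Defs.
From HB Require Import structures.
From mathcomp Require Import all_boot all_order all_algebra.
From mathcomp Require Import all_classical all_reals all_analysis.
From mathcomp Require Import poisson_distribution.
From mathcomp Require Import ring lra.
Import Order.TTheory GRing.Theory Num.Theory.
Local Open Scope ring_scope.

Section Det.
Variable R : realType.

Lemma expR_sq_bound (s : R) : -2 <= s -> s ^+ 2 / 4 <= expR s - 1 - s.
Proof.
move=> hs.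
have e : expR s = expR (s/2) ^+ 2 by rewrite expr2 -expRD; congr expR; lra.
have h1 := expR_ge1Dx (s/2).
have h0 : 0 <= 1 + s/2 by lra.
have : (1 + s/2) ^+ 2 <= expR (s/2) ^+ 2.
  by rewrite ler_sqr ?nnegrE // (le_trans h0 h1).
rewrite -e; nra.
Qed.

Lemma expR_lin_bound (s : R) : s < -2 -> - s / 2 <= expR s - 1 - s.
Proof. move=> hs; have := expR_gt0 s; lra. Qed.

Lemma expR_near1 (s : R) : `|s| <= 1/2 -> `|expR s - 1| <= 2 * `|s|.
Proof.
move=> hs.
have uv : expR s * expR (- s) = 1 by rewrite -expRD subrr expR0.
have hu := expR_ge1Dx s. have hv := expR_ge1Dx (- s).
have u0 := expR_gt0 s. have v0 := expR_gt0 (- s).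
move: hs; case: (lerP 0 s) => s0.
  rewrite (ger0_norm s0) => hs.
  have hu1 : 1 <= expR s by have := expR_ge1Dx s; lra.
  rewrite ger0_norm; last lra.
  nra.
rewrite (ltr0_norm s0) => hs.
have hu1 : expR s <= 1 by nra.
rewrite ler0_norm; last lra.
nra.
Qed.


Lemma le_of_sq (a b : R) : 0 <= b -> a ^+ 2 <= b ^+ 2 -> a <= b.
Proof. move=> hb h; rewrite leNgt; apply/negP => hab; nra. Qed.

Lemma det_bound (n : nat) (lam lh y : 'I_n -> R) (K : R) :
  0 < K -> (forall i, 0 < lam i) -> (forall i, 0 < lh i) ->
  (forall i, 64 * K ^+ 2 * n%:R ^+ 2 <= lam i) ->
  (forall i, (y i - lam i) ^+ 2 <= K ^+ 2 * lam i) ->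
  \sum_i (y i * ln (lam i) - lam i) <= \sum_i (y i * ln (lh i) - lh i) ->
  forall i, `|(lh i - lam i) / Num.sqrt (lam i)| <= 8 * K * n%:R.
Proof.
move=> K0 lam0 lh0 lamb yb mle i0.
pose s i := ln (lh i) - ln (lam i).
have lhE i : lh i = lam i * expR (s i).
  by rewrite /s expRD expRN !lnK ?posrE // mulrCA divff ?mulr1 // gt_eqF.
pose w i := Num.sqrt (lam i) * `|s i|.
have sq0 i : 0 < Num.sqrt (lam i) by rewrite sqrtr_gt0.
have sqsq i : Num.sqrt (lam i) ^+ 2 = lam i by rewrite sqr_sqrtr // ltW.
have yb' i : `|y i - lam i| <= K * Num.sqrt (lam i).
  apply: le_of_sq; first by rewrite mulr_ge0 // ltW.
  by rewrite real_normK ?num_real // exprMn sqsq.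
have key : \sum_i lam i * (expR (s i) - 1 - s i) <= \sum_i (y i - lam i) * s i.
  rewrite -subr_ge0 -sumrB (eq_bigr (fun i => (y i * ln (lh i) - lh i) - (y i * ln (lam i) - lam i))).
    by rewrite sumrB subr_ge0.
  move=> i _; rewrite lhE lnM ?posrE ?expR_gt0 // expRK; ring.
have nI : (0 < n)%N by case: i0 => k hk; apply: leq_ltn_trans hk.
have key2 : \sum_i lam i * (expR (s i) - 1 - s i) <= \sum_i K * w i.
  apply: (le_trans key); apply: ler_sum => i _.
  apply: (le_trans (ler_norm _)); rewrite normrM /w mulrA.
  by apply: ler_wpM2r => //; rewrite yb'.
have g0 i : 0 <= expR (s i) - 1 - s i by have := expR_ge1Dx (s i); lra.
case: (@arg_maxP _ _ _ i0 xpredT w isT) => j _ jmax.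
have K1 : \sum_i K * w i <= n%:R * (K * w j).
  have -> : n%:R * (K * w j) = \sum_(i < n) (K * w j) by rewrite sumr_const card_ord mulr_natl.
  apply: ler_sum => i _.
  by apply: ler_wpM2l; [lra|apply: jmax].
have K2 : lam j * (expR (s j) - 1 - s j) <= \sum_i lam i * (expR (s i) - 1 - s i).
  rewrite (bigD1 j) //= lerDl; apply: sumr_ge0 => i _.
  by apply: mulr_ge0; [apply: ltW|].
have main : lam j * (expR (s j) - 1 - s j) <= n%:R * K * w j.
  by rewrite -mulrA; apply: le_trans K2 (le_trans key2 K1).
have n0 : 1 <= n%:R :> R by rewrite ler1n.
have sqb : 8 * K * n%:R <= Num.sqrt (lam j).
  apply: le_of_sq; first by rewrite ltW.
  by rewrite sqsq; move: (lamb j); rewrite !exprMn; lra.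
have wjb : w j <= 4 * K * n%:R.
  have w0 : 0 <= w j by rewrite /w mulr_ge0 // ltW.
  case: (lerP (-2) (s j)) => hs.
    have := @expR_sq_bound (s j) hs.
    move=> gb.
    have : lam j * (s j ^+ 2 / 4) <= n%:R * K * w j.
      by apply: le_trans main; apply: ler_wpM2l => //; apply: ltW.
    have ww : w j ^+ 2 = lam j * s j ^+ 2.
      by rewrite /w exprMn sqsq real_normK ?num_real.
    have Kn : 0 < K * n%:R by rewrite mulr_gt0 // ltr0n.
    move=> h; rewrite leNgt; apply/negP => hw.
    have : w j ^+ 2 / 4 <= n%:R * K * w j by rewrite ww; move: h; rewrite mulrA.
    nra.
  have := @expR_lin_bound (s j) hs => gb.
  have : lam j * (- s j / 2) <= n%:R * K * w j.
    by apply: le_trans main; apply: ler_wpM2l => //; apply: ltW.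
  rewrite /w (ltr0_norm (x := s j)); last lra.
  move=> h; exfalso.
  have q0 := sq0 j.
  have Kn : 0 < K * n%:R by rewrite mulr_gt0 // ltr0n.
  have qt : 0 < Num.sqrt (lam j) * (- s j) by rewrite mulr_gt0 //; lra.
  have : Num.sqrt (lam j) * (- s j) * (Num.sqrt (lam j) / 2 - n%:R * K) <= 0.
    have -> : Num.sqrt (lam j) * (- s j) * (Num.sqrt (lam j) / 2 - n%:R * K) =
      Num.sqrt (lam j) ^+ 2 * (- s j / 2) - n%:R * K * (Num.sqrt (lam j) * (- s j)) by ring.
    by rewrite sqsq subr_le0.
  rewrite pmulr_rle0 //; lra.
have Kn : 0 < K * n%:R by rewrite mulr_gt0 // ltr0n.
have wi i : w i <= 4 * K * n%:R by apply: le_trans (jmax i isT) wjb.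
have si i : `|s i| <= 1/2.
  have hi : 8 * K * n%:R <= Num.sqrt (lam i).
    apply: le_of_sq; first by rewrite ltW.
    by rewrite sqsq; move: (lamb i); rewrite !exprMn; lra.
  have : `|s i| * (8 * K * n%:R) <= 4 * K * n%:R.
    apply: le_trans (wi i); rewrite /w mulrC; apply: ler_wpM2r => //.
  move=> h; nra.
have -> : lh i0 - lam i0 = lam i0 * (expR (s i0) - 1) by rewrite lhE; ring.
have -> : lam i0 * (expR (s i0) - 1) / Num.sqrt (lam i0) = Num.sqrt (lam i0) * (expR (s i0) - 1).
  rewrite -[in X in X / _ = _](sqsq i0); field.
  by rewrite gt_eqF.
rewrite normrM (ger0_norm (ltW (sq0 i0))).
have := @expR_near1 (s i0) (si i0) => h.
have := wi i0; rewrite /w => h2.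
have := sq0 i0; nra.
Qed.




Lemma expsum_le (lam : R) N : 0 <= lam ->
  \sum_(k < N) lam ^+ k / k`!%:R <= expR lam.
Proof.
move=> l0; rewrite expRE /=.
have -> : \sum_(k < N) lam ^+ k / k`!%:R =
    pseries (fun n => n`!%:R^-1) lam N.
  rewrite /pseries /series /= -(big_mkord xpredT (fun k => lam ^+ k / k`!%:R)).
  by apply: eq_bigr => k _; rewrite mulrC.
apply: nondecreasing_cvgn_le.
  rewrite /pseries /series /=; apply: nondecreasing_series => n _ _.
  by rewrite mulr_ge0 ?exprn_ge0 // invr_ge0.
have -> : pseries (fun n => n`!%:R^-1) lam = series (exp_coeff lam).
  by rewrite exp_coeffE.
exact: is_cvg_series_exp_coeff.
Qed.

Lemma var_identity (lam : R) N :
  \sum_(k < N.+1) lam ^+ k / k`!%:R * (k%:R - lam) ^+ 2 =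
  lam * \sum_(k < N.+1) lam ^+ k / k`!%:R
  - lam * (lam ^+ N / N`!%:R) * (N.+1%:R - lam).
Proof.
elim: N => [|N IH].
  by rewrite !big_ord_recr !big_ord0 /= !add0r fact0 expr0 !divr1 !mul1r; ring.
rewrite big_ord_recr IH /= [in RHS]big_ord_recr /=.
have cS : lam ^+ N.+1 / N.+1`!%:R * N.+1%:R = lam * (lam ^+ N / N`!%:R).
  rewrite factS natrM exprS invfM; field.
  apply/andP; split; first by rewrite pnatr_eq0 -lt0n fact_gt0.
  by rewrite addrC natr1 pnatr_eq0.
rewrite -cS -[N.+2%:R]natr1; ring.
Qed.

Lemma pois_sum_le1 (lam : R) N : 0 < lam ->
  \sum_(k < N) poisson_pmf lam k <= 1.
Proof.
move=> l0; rewrite /poisson_pmf l0.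
have -> : \sum_(k < N) lam ^+ k * k`!%:R^-1 * expR (- lam) =
    (\sum_(k < N) lam ^+ k / k`!%:R) * expR (- lam) by rewrite mulr_suml.
have e1 := @expsum_le lam N (ltW l0).
have ee : expR lam * expR (- lam) = 1 by rewrite -expRD subrr expR0.
have e0 := expR_gt0 (- lam).
nra.
Qed.

Lemma pois_var_le (lam : R) N : 0 < lam -> lam <= N.+1%:R ->
  \sum_(k < N.+1) poisson_pmf lam k * (k%:R - lam) ^+ 2 <= lam.
Proof.
move=> l0 lN; rewrite /poisson_pmf l0.
have -> : \sum_(k < N.+1) lam ^+ k * k`!%:R^-1 * expR (- lam) * (k%:R - lam) ^+ 2 =
    (\sum_(k < N.+1) lam ^+ k / k`!%:R * (k%:R - lam) ^+ 2) * expR (- lam).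
  by rewrite mulr_suml; apply: eq_bigr => k _; ring.
rewrite var_identity.
have e1 := @expsum_le lam N.+1 (ltW l0).
have c0 : 0 <= lam ^+ N / N`!%:R by rewrite divr_ge0 ?exprn_ge0 ?ltW.
have ee : expR lam * expR (- lam) = 1 by rewrite -expRD subrr expR0.
have e0 := expR_gt0 (- lam).
have t0 : 0 <= lam * (lam ^+ N / N`!%:R) * (N.+1%:R - lam).
  by apply: mulr_ge0; [apply: mulr_ge0 => //; apply: ltW | rewrite subr_ge0].
set E := \sum_(k < N.+1) _ in e1 *.
set t := lam * _ * _ in t0 *.
have h1 : E * expR (- lam) <= 1 by nra.
have h2 : 0 <= t * expR (- lam) by rewrite mulr_ge0 // ltW.
nra.
Qed.




Lemma box_bound (n N : nat) (lam : 'I_n -> R) (K : R) :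
  0 < K -> (forall i, 0 < lam i) -> (forall i, lam i <= N.+1%:R) ->
  \sum_(b : {ffun 'I_n -> 'I_N.+1})
     ((\prod_i poisson_pmf (lam i) (b i)) *
      \sum_k (((b k : nat)%:R - lam k) ^+ 2 / (K ^+ 2 * lam k)))
  <= n%:R / K ^+ 2.
Proof.
move=> K0 l0 lN.
under eq_bigr => b _ do rewrite mulr_sumr.
rewrite exchange_big /=.
have -> : n%:R / K ^+ 2 = \sum_(k < n) (1 / K ^+ 2).
  by rewrite sumr_const card_ord mulr_natl mul1r.
apply: ler_sum => k _.
pose F (i : 'I_n) (m : 'I_N.+1) := poisson_pmf (lam i) m *
  (if i == k then ((m : nat)%:R - lam k) ^+ 2 / (K ^+ 2 * lam k) else 1).
have -> : \sum_(b : {ffun 'I_n -> 'I_N.+1})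
     ((\prod_i poisson_pmf (lam i) (b i)) *
      (((b k : nat)%:R - lam k) ^+ 2 / (K ^+ 2 * lam k)))
   = \sum_(b : {ffun 'I_n -> 'I_N.+1}) \prod_i F i (b i).
  apply: eq_bigr => b _; rewrite /F big_split /=; congr (_ * _).
  by rewrite (bigD1 k) //= eqxx big1 ?mulr1 // => i /negPf ->.
rewrite -bigA_distr_bigA /=.
have -> : 1 / K ^+ 2 = \prod_(i < n) (if i == k then 1 / K ^+ 2 else 1).
  by rewrite (bigD1 k) //= eqxx big1 ?mulr1 // => i /negPf ->.
apply: ler_prod => i _; apply/andP; split.
  by apply: sumr_ge0 => m _; rewrite /F mulr_ge0 ?poisson_pmf_ge0 //; case: ifP => _ //;
     rewrite divr_ge0 ?sqr_ge0 // mulr_ge0 ?sqr_ge0 // ltW.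
rewrite /F; case: eqP => [->|_].
  under eq_bigr do rewrite mulrA.
  rewrite -mulr_suml.
  have := @pois_var_le (lam k) N (l0 k) (lN k).
  move=> h.
  have c0 : 0 < K ^+ 2 * lam k by rewrite mulr_gt0 ?exprn_gt0.
  rewrite ler_pdivrMr //.
  have -> : 1 / K ^+ 2 * (K ^+ 2 * lam k) = lam k.
    by field; rewrite gt_eqF.
  exact: h.
under eq_bigr do rewrite mulr1.
exact: (@pois_sum_le1 (lam i) N.+1 (l0 i)).
Qed.



End Det.

Theorem lemma3p3 (R : realType) (J I : nat) (A : 'M[R]_(J, I))
  (lam0 : nat -> 'cV[R]_I) :
  zero_one_mx A -> full_row_rank A -> col_has_one A ->
  (forall r, RM A (lam0 r)) ->
  min_to_infty lam0 ->
  forall eps : R, 0 < eps ->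
  exists M : R, exists r0 : nat, forall r, (r0 <= r)%N ->
    (pois_prob (lam0 r) (big_error_event A (lam0 r) M) <= eps%:E)%E.
Proof.
move=> _ _ _ RMl minf eps eps0.
pose K : R := I%:R / eps + 1.
have K1 : 1 <= K by rewrite /K lerDr divr_ge0 // ltW.
have K0 : 0 < K by lra.
exists (8 * K * I%:R).
have [r0 hr0] := minf (64 * K ^+ 2 * I%:R ^+ 2).
exists r0 => r hr.
set lam := lam0 r.
have lpos : forall i, 0 < lam i 0 := (RMl r).1.
have lb : forall i, 64 * K ^+ 2 * I%:R ^+ 2 <= lam i 0 := hr0 r hr.
pose H (y : {ffun 'I_I -> nat}) :=
  \sum_k (((y k)%:R - lam k 0) ^+ 2 / (K ^+ 2 * lam k 0)).
have Hterm0 : forall (k : 'I_I) (t : R), 0 <= t ^+ 2 / (K ^+ 2 * lam k 0).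
  by move=> k t; rewrite divr_ge0 ?sqr_ge0 // mulr_ge0 ?sqr_ge0 // ltW.
have key : forall y, big_error_event A lam (8 * K * I%:R) y -> 1 <= H y.
  move=> y [lamh [[RMh mle] [i hi]]].
  case: (boolP [forall k, ((y k)%:R - lam k 0) ^+ 2 <= K ^+ 2 * lam k 0]).
    move=> /forallP hall; exfalso.
    have := @det_bound R I (fun k => lam k 0) (fun k => lamh k 0) (fun k => (y k)%:R) K
      K0 lpos RMh.1 lb hall (mle lam (RMl r)) i.
    by rewrite leNgt hi.
  move=> /forallPn [k hk].
  rewrite /H (bigD1 k) //=.
  have t1 : 1 <= ((y k)%:R - lam k 0) ^+ 2 / (K ^+ 2 * lam k 0).
    rewrite ler_pdivlMr ?mul1r; last by rewrite mulr_gt0 ?exprn_gt0.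
    by rewrite ltW // ltNge.
  have r0' : 0 <= \sum_(i0 < I | i0 != k) ((y i0)%:R - lam i0 0) ^+ 2 / (K ^+ 2 * lam i0 0).
    by apply: sumr_ge0 => j _; apply: Hterm0.
  lra.
rewrite /pois_prob /esum; apply: ge_ereal_sup => _ [X [finX XE] <-].
rewrite fsumEFin // lee_fin fsbig_finite //=.
have memX : forall x : {ffun 'I_I -> nat}, x \in finmap.enum_fset (fset_set X) -> X x.
  move=> x xS; have e := in_fset_set finX x.
  suff : x \in X by rewrite inE.
  by rewrite -e; exact: xS.
have us := finmap.fset_uniq (fset_set X).
move: (finmap.enum_fset (fset_set X)) memX us => S memX us.
pose N1 := (\sum_(x <- S) \sum_k x k)%N.
pose N := (N1 + \sum_(k < I) Num.Def.archi_bound (lam k 0)%R)%N.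
have xb : forall x, x \in S -> forall k, (x k < N.+1)%N.
  move=> x xS k; rewrite ltnS /N.
  apply: (leq_trans _ (leq_addr _ _)).
  apply: (@leq_trans (\sum_k x k)%N); first by rewrite (bigD1 k) //= leq_addr.
  by rewrite /N1 (big_rem x xS) /= leq_addr.
have lN : forall k, lam k 0 <= N.+1%:R.
  move=> k; apply: ltW; apply: (lt_le_trans (archi_boundP (ltW (lpos k)))).
  rewrite ler_nat /N; apply: leqW; apply: (leq_trans _ (leq_addl _ _)).
  by rewrite (bigD1 k) //= leq_addr.
pose proj (x : {ffun 'I_I -> nat}) : {ffun 'I_I -> 'I_N.+1} := [ffun k => inord (x k)].
pose emb (b : {ffun 'I_I -> 'I_N.+1}) : {ffun 'I_I -> nat} := [ffun k => nat_of_ord (b k)].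
have embproj : forall x, x \in S -> emb (proj x) = x.
  by move=> x xS; apply/ffunP => k; rewrite !ffunE inordK // xb.
pose h (b : {ffun 'I_I -> 'I_N.+1}) := (\prod_i poisson_pmf (lam i 0) (b i)) *
      \sum_k (((b k : nat)%:R - lam k 0) ^+ 2 / (K ^+ 2 * lam k 0)).
have hE : forall b, h b = pois_vec_pmf lam (emb b) * H (emb b).
  by move=> b; rewrite /h /pois_vec_pmf /H; congr (_ * _);
    apply: eq_bigr => i _; rewrite ffunE.
have h0 : forall b, 0 <= h b.
  move=> b; rewrite /h mulr_ge0 //; first by apply: prodr_ge0 => i _; apply: poisson_pmf_ge0.
  by apply: sumr_ge0 => k _; apply: Hterm0.
apply: (@le_trans _ _ (\sum_(x <- S) h (proj x))).
  rewrite big_seq [X in _ <= X]big_seq; apply: ler_sum => x xS.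
  rewrite hE embproj //; apply: ler_peMr.
    by apply: prodr_ge0 => i _; apply: poisson_pmf_ge0.
  exact: key (XE _ (memX x xS)).
rewrite -(big_map proj xpredT h) big_uniq; last first.
  rewrite map_inj_in_uniq // => x1 x2 x1S x2S e.
  by rewrite -(embproj x1 x1S) -(embproj x2 x2S) e.
apply: (@le_trans _ _ (\sum_b h b)).
  rewrite big_mkcond /=; apply: ler_sum => b _; case: ifP => _ //.
apply: (le_trans (@box_bound R I N (fun k => lam k 0) K K0 lpos lN)).
rewrite ler_pdivrMr ?exprn_gt0 //.
have : I%:R <= eps * K.
  rewrite /K mulrDr mulrCA mulfV ?mulr1 ?gt_eqF //; lra.
have : K <= K ^+ 2 by rewrite expr2 ler_peMr // ltW.
nra.
Qed.
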